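(* Given $x_0\in[0,1]$, there is an infinite-dimensional vector subspace $S$ of $C^0([0,1])$ such that every $F$ in the closure of $S$ in $C([0,1])$ with respect to the supremum norm satisfies: (1) $F$ is a primitive of a Kurzweil integrable function, i.e. there is a Kurzweil integrable $f$ on $[0,1]$ with $F(x)-F(0)=\int_0^x f$ for all $x\in[0,1]$; and (2) $F$ is differentiable at every point of $[0,1]$ except possibly at $x_0$.
   Context: $C^0([0,1])$ denotes the set of everywhere differentiable real functions on $[0,1]$; $C([0,1])$ is the Banach space of continuous real functions on $[0,1]$ with the supremum norm. Kurzweil integral means the Henstock–Kurzweil integral. *)

(* Defs.v *)
From Stdlib Require Import Reals Lra.
Open Scope R_scope.

Fixpoint sumR (n : nat) (u : nat -> R) : R :=
  match n with
  | O => 0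
  | S m => sumR m u + u m
  end.

Definition in01 (x : R) : Prop := 0 <= x <= 1.

Definition diff_at01 (F : R -> R) (x : R) : Prop :=
  exists l : R, forall eps : R, eps > 0 -> exists d : R, d > 0 /\
    forall y : R, in01 y -> y <> x -> Rabs (y - x) < d ->
      Rabs ((F y - F x) / (y - x) - l) < eps.

Definition cont_at01 (F : R -> R) (x : R) : Prop :=
  forall eps : R, eps > 0 -> exists d : R, d > 0 /\
    forall y : R, in01 y -> Rabs (y - x) < d -> Rabs (F y - F x) < eps.

(* C^0([0,1]) in the paper's notation: everywhere differentiable on [0,1] *)
Definition everywhere_diff01 (F : R -> R) : Prop := forall x, in01 x -> diff_at01 F x.

Definition cont01 (F : R -> R) : Prop := forall x, in01 x -> cont_at01 F x.

Definition fine_tagged_partition (delta : R -> R) (a b : R)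
    (n : nat) (x t : nat -> R) : Prop :=
  x O = a /\ x n = b /\
  (forall i, (i < n)%nat ->
     x i < x (S i) /\ x i <= t i <= x (S i) /\
     t i - delta (t i) < x i /\ x (S i) < t i + delta (t i)).

Definition riemann_sum (f : R -> R) (n : nat) (x t : nat -> R) : R :=
  sumR n (fun i => f (t i) * (x (S i) - x i)).

Definition HK_integral (f : R -> R) (a b I : R) : Prop :=
  forall eps : R, eps > 0 ->
    exists delta : R -> R, (forall s, a <= s <= b -> delta s > 0) /\
      forall (n : nat) (x t : nat -> R),
        fine_tagged_partition delta a b n x t ->
        Rabs (riemann_sum f n x t - I) < eps.

Definition HK_integrable (f : R -> R) (a b : R) : Prop :=
  exists I, HK_integral f a b I.

(* vector subspace of functions (identified by their values on [0,1] only
   through the notions below) *)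
Definition is_subspace (S : (R -> R) -> Prop) : Prop :=
  S (fun _ => 0) /\
  (forall f g, S f -> S g -> S (fun y => f y + g y)) /\
  (forall (c : R) f, S f -> S (fun y => c * f y)).

Definition infinite_dim01 (S : (R -> R) -> Prop) : Prop :=
  forall n : nat, exists g : nat -> (R -> R),
    (forall i, (i < n)%nat -> S (g i)) /\
    forall c : nat -> R,
      (forall y, in01 y -> sumR n (fun i => c i * g i y) = 0) ->
      forall i, (i < n)%nat -> c i = 0.

Definition in_closure01 (S : (R -> R) -> Prop) (F : R -> R) : Prop :=
  cont01 F /\
  forall eps : R, eps > 0 -> exists G, S G /\
    forall y, in01 y -> Rabs (F y - G y) <= eps.

(* Main.v *)
Require Import Defs.
From Stdlib Require Import Reals Lra Lia ClassicalEpsilon.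
Open Scope R_scope.

Lemma sumR_ext n u v : (forall i, (i < n)%nat -> u i = v i) -> sumR n u = sumR n v.
Proof. induction n; simpl; intros H; auto. rewrite IHn by (intros; apply H; lia). rewrite H by lia; auto. Qed.

Lemma sumR_plus n u v : sumR n (fun i => u i + v i) = sumR n u + sumR n v.
Proof. induction n; simpl; [lra|]. rewrite IHn; lra. Qed.

Lemma sumR_scal n c u : sumR n (fun i => c * u i) = c * sumR n u.
Proof. induction n; simpl; [lra|]. rewrite IHn; lra. Qed.

Lemma sumR_le n u v : (forall i, (i < n)%nat -> u i <= v i) -> sumR n u <= sumR n v.
Proof. induction n; simpl; intros H; [lra|]. assert (u n <= v n) by (apply H; lia).
 assert (sumR n u <= sumR n v) by (apply IHn; intros; apply H; lia). lra. Qed.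

Lemma sumR_abs n u : Rabs (sumR n u) <= sumR n (fun i => Rabs (u i)).
Proof. induction n; simpl. rewrite Rabs_R0; lra.
 eapply Rle_trans. apply Rabs_triang. lra. Qed.

Lemma sumR_tele n g : sumR n (fun i => g (S i) - g i) = g n - g O.
Proof. induction n; simpl; [lra|]. rewrite IHn; lra. Qed.

Lemma DQbound a h l e : h <> 0 -> Rabs (a / h - l) < e -> Rabs (a - l * h) <= e * Rabs h.
Proof. intros Hh H. replace (a - l*h) with (h * (a/h - l)) by (field; auto).
 rewrite Rabs_mult. rewrite (Rmult_comm e). apply Rmult_le_compat_l. apply Rabs_pos. lra. Qed.

Lemma part_mono delta a b n x t : fine_tagged_partition delta a b n x t ->
  forall i j, (i <= j <= n)%nat -> x i <= x j.
Proof. intros [H0 [Hn H]] i j. induction j; intros Hij.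
 assert (i = O) by lia. subst; lra.
 destruct (Nat.eq_dec i (S j)). subst; lra.
 assert (x i <= x j) by (apply IHj; lia). destruct (H j ltac:(lia)) as [A _]. lra. Qed.

Definition indx (x0 : R) (t : R) : R := if Req_dec_T t x0 then 1 else 0.

Lemma count_lemma delta a b x0 n x t : fine_tagged_partition delta a b n x t ->
  forall m, (m <= n)%nat ->
  sumR m (fun i => indx x0 (t i)) <= 2 /\
  (x m <= x0 -> sumR m (fun i => indx x0 (t i)) <= 1) /\
  (x m < x0 -> sumR m (fun i => indx x0 (t i)) <= 0).
Proof. intros HP. pose proof HP as [_ [_ H]]. induction m; intros Hm; simpl.
 lra.
 destruct (IHm ltac:(lia)) as [A [B C]]. destruct (H m ltac:(lia)) as [H1 [[H2 H3] _]].
 unfold indx at 2 4 6. destruct (Req_dec_T (t m) x0).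
 - subst. split; [|split]; intros; try lra.
 - split; [|split]; intros; try lra. Qed.

Definition DQ (F : R -> R) (s l : R) : Prop :=
  forall eps : R, eps > 0 -> exists d : R, d > 0 /\
    forall y : R, in01 y -> y <> s -> Rabs (y - s) < d ->
      Rabs ((F y - F s) / (y - s) - l) < eps.

Lemma FTC (F : R -> R) (x0 : R) : in01 x0 -> cont01 F ->
  (forall x, 0 <= x <= 1 -> x <> x0 -> diff_at01 F x) ->
  exists f : R -> R, HK_integrable f 0 1 /\
          forall x, 0 <= x <= 1 -> HK_integral f 0 x (F x - F 0).
Proof.
  intros Hx0 Hc Hd.
  set (f := fun s => epsilon (inhabits 0) (fun l => DQ F s l)).
  assert (Hf : forall s, in01 s -> s <> x0 -> DQ F s (f s)).
  { intros s Hs Hne. apply epsilon_spec. apply Hd; auto. }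
  assert (Hmain : forall x, 0 <= x <= 1 -> HK_integral f 0 x (F x - F 0)).
  { intros x Hx eps Heps.
    set (e1 := eps / 4). set (e2 := eps / 16).
    destruct (Hc x0 Hx0 e2 ltac:(unfold e2; lra)) as [d0 [Hd0 Hd0']].
    set (d0' := Rmin d0 (e2 / (Rabs (f x0) + 1))).
    assert (Hd0'pos : d0' > 0).
    { unfold d0'. apply Rmin_glb_lt; auto. apply Rdiv_lt_0_compat. unfold e2; lra.
      pose proof (Rabs_pos (f x0)); lra. }
    set (P := fun s d => d > 0 /\ forall y, in01 y -> y <> s -> Rabs (y - s) < d ->
                 Rabs ((F y - F s) / (y - s) - f s) < e1).
    set (delta := fun s => if Req_dec_T s x0 then d0' else epsilon (inhabits 1) (P s)).
    assert (HP : forall s, in01 s -> s <> x0 -> P s (delta s)).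
    { intros s Hs Hne. unfold delta. destruct (Req_dec_T s x0); [contradiction|].
      apply epsilon_spec. apply (Hf s Hs Hne). unfold e1; lra. }
    exists delta. split.
    { intros s Hs. unfold delta at 1. destruct (Req_dec_T s x0); auto.
      destruct (HP s ltac:(unfold in01; lra) n) as [A _]. unfold delta in A.
      destruct (Req_dec_T s x0); [contradiction|exact A]. }
    intros n xs ts Hpart.
    pose proof Hpart as [H0 [Hn Hint]].
    assert (Hin : forall i, (i <= n)%nat -> in01 (xs i)).
    { intros i Hi. pose proof (part_mono _ _ _ _ _ _ Hpart O i ltac:(lia)).
      pose proof (part_mono _ _ _ _ _ _ Hpart i n ltac:(lia)). unfold in01; lra. }
    assert (Hbound : forall i, (i < n)%nat ->
       Rabs (f (ts i) * (xs (S i) - xs i) - (F (xs (S i)) - F (xs i)))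
        <= e1 * (xs (S i) - xs i) + 4 * e2 * indx x0 (ts i)).
    { intros i Hi. destruct (Hint i Hi) as [Hlt [[Ht1 Ht2] [Hl Hr]]].
      pose proof (Hin i ltac:(lia)) as Hi1. pose proof (Hin (S i) ltac:(lia)) as Hi2.
      unfold indx. destruct (Req_dec_T (ts i) x0) as [Heq|Hne].
      - unfold delta in Hl, Hr. rewrite Heq in Hl, Hr. destruct (Req_dec_T x0 x0); [|congruence].
        rewrite Heq in *.
        assert (d0' <= d0) by apply Rmin_l.
        assert (d0' <= e2 / (Rabs (f x0) + 1)) by apply Rmin_r.
        assert (A1 : Rabs (F (xs (S i)) - F x0) < e2) by (apply Hd0'; auto; apply Rabs_def1; lra).
        assert (A2 : Rabs (F (xs i) - F x0) < e2) by (apply Hd0'; auto; apply Rabs_def1; lra).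
        assert (A3 : Rabs (f x0) * (xs (S i) - xs i) <= 2 * e2).
        { assert (Rabs (f x0) * (xs (S i) - xs i) <= Rabs (f x0) * (2 * d0')).
          { apply Rmult_le_compat_l. apply Rabs_pos. lra. }
          assert (Rabs (f x0) * d0' <= e2).
          { pose proof (Rabs_pos (f x0)).
            apply Rle_trans with (Rabs (f x0) * (e2 / (Rabs (f x0) + 1))).
            apply Rmult_le_compat_l; lra.
            unfold Rdiv. replace (Rabs (f x0) * (e2 * / (Rabs (f x0) + 1))) with
              (e2 * (Rabs (f x0) / (Rabs (f x0) + 1))) by (field; lra).
            assert (Rabs (f x0) / (Rabs (f x0) + 1) <= 1).
            { apply Rmult_le_reg_r with (Rabs (f x0) + 1). lra. unfold Rdiv.
              rewrite Rmult_assoc, Rinv_l by lra. lra. }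
            assert (e2 > 0) by (unfold e2; lra). nra. }
          lra. }
        replace (f x0 * (xs (S i) - xs i) - (F (xs (S i)) - F (xs i))) with
          (f x0 * (xs (S i) - xs i) - (F (xs (S i)) - F x0) + (F (xs i) - F x0)) by ring.
        eapply Rle_trans. apply Rabs_triang. eapply Rle_trans. apply Rplus_le_compat_r.
        apply Rabs_triang. rewrite Rabs_Ropp, Rabs_mult, (Rabs_right (xs (S i) - xs i)) by lra.
        assert (e1 * (xs (S i) - xs i) >= 0). { assert (e1 > 0) by (unfold e1; lra). nra. }
        lra.
      - assert (Hts : in01 (ts i)) by (unfold in01 in *; lra).
        destruct (HP (ts i) Hts Hne) as [_ HQ].
        set (t := ts i) in *.
        assert (B : forall y, in01 y -> Rabs (y - t) < delta t ->
                 Rabs (F y - F t - f t * (y - t)) <= e1 * Rabs (y - t)).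
        { intros y Hy Hyd. destruct (Req_dec_T y t) as [->|Hyt].
          replace (F t - F t - f t * (t - t)) with 0 by ring. rewrite Rabs_R0.
          pose proof (Rabs_pos (t-t)). assert (e1 > 0) by (unfold e1; lra). nra.
          apply DQbound. lra. apply HQ; auto. }
        assert (B1 := B (xs (S i)) Hi2 ltac:(apply Rabs_def1; lra)).
        assert (B2 := B (xs i) Hi1 ltac:(apply Rabs_def1; lra)).
        rewrite (Rabs_right (xs (S i) - t)) in B1 by lra.
        rewrite (Rabs_left1 (xs i - t)) in B2 by lra.
        replace (f t * (xs (S i) - xs i) - (F (xs (S i)) - F (xs i))) with
          (-(F (xs (S i)) - F t - f t * (xs (S i) - t)) + (F (xs i) - F t - f t * (xs i - t))) by ring.
        eapply Rle_trans. apply Rabs_triang. rewrite Rabs_Ropp. lra. }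
    assert (Htele : F x - F 0 = sumR n (fun i => F (xs (S i)) - F (xs i))).
    { rewrite (sumR_tele n (fun i => F (xs i))). rewrite Hn, H0. auto. }
    unfold riemann_sum. rewrite Htele.
    replace (sumR n (fun i => f (ts i) * (xs (S i) - xs i)) - sumR n (fun i => F (xs (S i)) - F (xs i)))
      with (sumR n (fun i => f (ts i) * (xs (S i) - xs i) - (F (xs (S i)) - F (xs i)))).
    2:{ replace (sumR n (fun i => f (ts i) * (xs (S i) - xs i)) - sumR n (fun i => F (xs (S i)) - F (xs i))) with
          (sumR n (fun i => f (ts i) * (xs (S i) - xs i)) + (-1) * sumR n (fun i => F (xs (S i)) - F (xs i))) by ring.
        rewrite <- (sumR_scal n (-1)), <- sumR_plus. apply sumR_ext; intros; ring. }
    eapply Rle_lt_trans. apply sumR_abs. eapply Rle_lt_trans. apply sumR_le. apply Hbound.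
    rewrite sumR_plus, sumR_scal, sumR_scal. rewrite (sumR_tele n xs), Hn, H0.
    destruct (count_lemma _ _ _ x0 _ _ _ Hpart n ltac:(lia)) as [C _].
    unfold e1, e2. nra. }
  exists f. split; auto. exists (F 1 - F 0). apply Hmain; lra.
Qed.

Definition pB (v : R) : R := (v - 5/8) * (7/8 - v).
Definition B (v : R) : R := 4096 * (Rmax 0 (pB v))^2.

Lemma B_zero v : v <= 5/8 \/ 7/8 <= v -> B v = 0.
Proof. intros H. unfold B. rewrite Rmax_left. ring. unfold pB. destruct H; nra. Qed.

Lemma B_peak : B (3/4) = 1.
Proof. unfold B, pB. rewrite Rmax_right by lra. field. Qed.

Lemma deriv_loc f g x d l : d > 0 -> (forall y, Rabs (y - x) < d -> f y = g y) ->
  derivable_pt_lim g x l -> derivable_pt_lim f x l.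
Proof. intros Hd Hfg Hg eps Heps. destruct (Hg eps Heps) as [del Hdel].
  assert (Hm : 0 < Rmin d del) by (apply Rmin_glb_lt; auto; apply cond_pos).
  exists (mkposreal _ Hm). intros h Hh Hhl. simpl in Hhl.
  rewrite !Hfg. apply Hdel; auto. apply Rlt_le_trans with (1 := Hhl); apply Rmin_r.
  rewrite Rminus_diag, Rabs_R0; auto.
  replace (x + h - x) with h by ring. apply Rlt_le_trans with (1 := Hhl); apply Rmin_l. Qed.

Lemma deriv_bound f x C d : d > 0 -> f x = 0 -> (forall y, Rabs (y - x) < d -> Rabs (f y) <= C * (y - x)^2) ->
  derivable_pt_lim f x 0.
Proof. intros Hd Hfx Hb eps Heps.
  assert (HC : 0 < Rmin d (eps / (Rabs C + 1))).
  { apply Rmin_glb_lt; auto. apply Rdiv_lt_0_compat; auto. pose proof (Rabs_pos C); lra. }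
  exists (mkposreal _ HC). intros h Hh Hhl. simpl in Hhl.
  pose proof (Rmin_l d (eps / (Rabs C + 1))). pose proof (Rmin_r d (eps / (Rabs C + 1))).
  specialize (Hb (x + h)). replace (x + h - x) with h in Hb by ring.
  specialize (Hb ltac:(lra)). rewrite Hfx, Rminus_0_r, Rminus_0_r.
  unfold Rdiv. rewrite Rabs_mult, Rabs_inv.
  assert (Habs : 0 < Rabs h) by (apply Rabs_pos_lt; auto).
  assert (E1 : Rabs (f (x + h)) <= Rabs C * Rabs h * Rabs h).
  { replace (h^2) with (Rabs h * Rabs h) in Hb by (rewrite <- Rabs_mult; rewrite Rabs_right; [ring|nra]).
    pose proof (Rle_abs C). nra. }
  assert (E2 : Rabs C * Rabs h < eps).
  { pose proof (Rabs_pos C).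
    apply Rle_lt_trans with (Rabs C * (eps / (Rabs C + 1))). nra.
    assert (eps - Rabs C * (eps / (Rabs C + 1)) = eps / (Rabs C + 1)) by (field; lra).
    assert (0 < eps / (Rabs C + 1)) by (apply Rdiv_lt_0_compat; lra). lra. }
  apply Rle_lt_trans with (Rabs C * Rabs h); auto.
  replace (Rabs C * Rabs h) with (Rabs C * Rabs h * Rabs h * / Rabs h) by (field; lra).
  apply Rmult_le_compat_r; auto. left; apply Rinv_0_lt_compat; auto.
Qed.

Lemma B_deriv v : exists l, derivable_pt_lim B v l.
Proof.
  assert (Hpoly : forall v, exists l, derivable_pt_lim (fun w => 4096 * (pB w)^2) v l).
  { intros w. assert (D : derivable_pt (fun w => 4096 * (pB w)^2) w) by (unfold pB; reg).
    destruct D as [l Hl]. eauto. }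
  destruct (Rlt_le_dec v (5/8)) as [H1|H1].
  { exists 0. apply (deriv_loc _ (fun _ => 0) _ (5/8 - v)). lra.
    intros y Hy. apply B_zero. left. apply Rabs_def2 in Hy. lra. apply derivable_pt_lim_const. }
  destruct (Rlt_le_dec (7/8) v) as [H2|H2].
  { exists 0. apply (deriv_loc _ (fun _ => 0) _ (v - 7/8)). lra.
    intros y Hy. apply B_zero. right. apply Rabs_def2 in Hy. lra. apply derivable_pt_lim_const. }
  destruct (Req_dec_T v (5/8)) as [->|H3].
  { exists 0. apply (deriv_bound _ _ 576 (1/8)). lra. apply B_zero; lra.
    intros y Hy. apply Rabs_def2 in Hy. destruct Hy as [Hy1 Hy2]. unfold B, pB. unfold Rmax. destruct (Rle_dec 0 _).
    rewrite Rabs_right by nra.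
    assert (Hb : (7/8 - y)^2 <= 9/64). { assert (0 < 7/8 - y) by lra. assert (7/8 - y < 3/8) by lra. apply Rle_trans with ((3/8)^2); [apply pow_incr; lra | right; field]. } assert (Ha : 0 <= (y - 5/8)^2) by apply pow2_ge_0.
    replace (((y - 5/8) * (7/8 - y))^2) with ((y-5/8)^2 * (7/8-y)^2) by ring. nra.
    rewrite Rabs_right by nra. nra. }
  destruct (Req_dec_T v (7/8)) as [->|H4].
  { exists 0. apply (deriv_bound _ _ 576 (1/8)). lra. apply B_zero; lra.
    intros y Hy. apply Rabs_def2 in Hy. destruct Hy as [Hy1 Hy2]. unfold B, pB. unfold Rmax. destruct (Rle_dec 0 _).
    rewrite Rabs_right by nra.
    assert (Hb : (y - 5/8)^2 <= 9/64). { assert (0 < y - 5/8) by lra. assert (y - 5/8 < 3/8) by lra. apply Rle_trans with ((3/8)^2); [apply pow_incr; lra | right; field]. } assert (Ha : 0 <= (y - 7/8)^2) by apply pow2_ge_0.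
    replace (((y - 5/8) * (7/8 - y))^2) with ((y-7/8)^2 * (y-5/8)^2) by ring. nra.
    rewrite Rabs_right by nra. nra. }
  destruct (Hpoly v) as [l Hl]. exists l.
  apply (deriv_loc _ (fun w => 4096 * pB w ^ 2) _ (Rmin (v - 5/8) (7/8 - v))).
  apply Rmin_glb_lt; lra.
  intros y Hy. pose proof (Rmin_l (v - 5/8) (7/8 - v)). pose proof (Rmin_r (v - 5/8) (7/8 - v)).
  apply Rabs_def2 in Hy. unfold B. rewrite Rmax_right. auto. unfold pB. nra.
  auto.
Qed.

Definition sg (x0 : R) : R := if Rle_dec x0 (1/2) then 1 else -1.
Definition phi (x0 : R) (k : nat) (y : R) : R := B (2^(S k) * (sg x0 * (y - x0))).

Lemma sg_cases x0 : (sg x0 = 1 /\ x0 <= 1/2) \/ (sg x0 = -1 /\ x0 > 1/2).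
Proof. unfold sg. destruct (Rle_dec x0 (1/2)); [left|right]; split; auto; lra. Qed.

Lemma sg_abs x0 a : Rabs (sg x0 * a) = Rabs a.
Proof. rewrite Rabs_mult. destruct (sg_cases x0) as [[-> _]|[-> _]].
  rewrite Rabs_R1; ring. rewrite Rabs_left by lra. ring. Qed.

Lemma sg_u x0 u : sg x0 * (x0 + sg x0 * u - x0) = u.
Proof. destruct (sg_cases x0) as [[-> _]|[-> _]]; ring. Qed.

Lemma in01_u x0 u : in01 x0 -> 0 <= u <= 1/2 -> in01 (x0 + sg x0 * u).
Proof. unfold in01. intros. destruct (sg_cases x0) as [[-> ?]|[-> ?]]; lra. Qed.

Lemma pow2_pos k : 0 < 2 ^ k.
Proof. apply pow_lt; lra. Qed.

Lemma pow2_lt j k : (j < k)%nat -> 2 * 2 ^ j <= 2 ^ k.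
Proof. intros H. change (2 * 2 ^ j) with (2 ^ (S j)). apply Rle_pow; lra || lia. Qed.

Lemma region k j w : 1/2 < 2^(S k) * w < 9/8 -> j <> k -> B (2^(S j) * w) = 0.
Proof. intros [H1 H2] Hjk. apply B_zero.
  assert (Hw : 0 < w). { pose proof (pow2_pos (S k)). nra. }
  destruct (Nat.lt_total j k) as [Hl|[Hl|Hl]]; [|lia|].
  - left. pose proof (pow2_lt (S j) (S k) ltac:(lia)). nra.
  - right. pose proof (pow2_lt (S k) (S j) ltac:(lia)). nra.
Qed.

Lemma pow2_ge n : INR n <= 2 ^ n.
Proof. induction n. simpl; lra. rewrite S_INR. simpl.
  assert (1 <= 2 ^ n) by (apply pow_R1_Rle; lra). lra. Qed.

Lemma find_k u : 0 < u < 9/16 -> exists k, 1/2 < 2^(S k) * u < 9/8.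
Proof. intros Hu.
  assert (Hex : forall n, 1/2 < 2^(S n) * u -> exists k, 1/2 < 2^(S k) * u < 9/8).
  { induction n; intros H.
    - exists O. simpl in *. lra.
    - destruct (Rlt_le_dec (1/2) (2^(S n) * u)). auto.
      exists (S n). split; auto. change (2^(S (S n))) with (2 * 2^(S n)). lra. }
  destruct (INR_unbounded (1/u)) as [n Hn]. apply (Hex n).
  pose proof (pow2_ge n). change (2^(S n)) with (2 * 2^n).
  assert (1 < INR n * u).
  { apply Rmult_lt_reg_r with (/u). apply Rinv_0_lt_compat; lra.
    rewrite Rmult_assoc, Rinv_r by lra. unfold Rdiv in Hn. lra. }
  nra.
Qed.

Lemma ownership x0 x : in01 x0 -> in01 x -> x <> x0 ->
  exists k d, d > 0 /\ forall y, Rabs (y - x) < d -> forall j, j <> k -> phi x0 j y = 0.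
Proof.
  intros H0 Hx Hne. set (u := sg x0 * (x - x0)).
  assert (Hdist : forall y, Rabs (sg x0 * (y - x0) - u) = Rabs (y - x)).
  { intros y. unfold u. rewrite <- (sg_abs x0 (y - x)). f_equal. ring. }
  assert (Hu0 : u <> 0).
  { unfold u. destruct (sg_cases x0) as [[-> _]|[-> _]]; intro; apply Hne; lra. }
  destruct (Rlt_le_dec u 0) as [Hneg|Hpos].
  { exists O, (-u). split. lra. intros y Hy j _. unfold phi. apply B_zero. left.
    rewrite <- Hdist in Hy. apply Rabs_def2 in Hy. pose proof (pow2_pos (S j)). nra. }
  destruct (Rlt_le_dec (7/16) u) as [Hbig|Hsmall].
  { exists O, (u - 7/16). split. lra. intros y Hy j _. unfold phi. apply B_zero. right.
    rewrite <- Hdist in Hy. apply Rabs_def2 in Hy. pose proof (pow2_pos j).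
    assert (1 <= 2^j) by (apply pow_R1_Rle; lra). change (2^(S j)) with (2 * 2^j). nra. }
  destruct (find_k u ltac:(lra)) as [k Hk].
  pose proof (pow2_pos (S k)) as Hp.
  exists k, (Rmin (2^(S k) * u - 1/2) (9/8 - 2^(S k) * u) / 2^(S k)). split.
  { apply Rdiv_lt_0_compat; auto. apply Rmin_glb_lt; lra. }
  intros y Hy j Hj. unfold phi. apply (region k); auto.
  rewrite <- Hdist in Hy. apply Rabs_def2 in Hy.
  set (m := Rmin (2^(S k) * u - 1/2) (9/8 - 2^(S k) * u)) in Hy.
  pose proof (Rmin_l (2^(S k) * u - 1/2) (9/8 - 2^(S k) * u)).
  pose proof (Rmin_r (2^(S k) * u - 1/2) (9/8 - 2^(S k) * u)). fold m in H, H1.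
  destruct Hy as [Hy1 Hy2].
  set (w := sg x0 * (y - x0)) in *.
  assert (E : 2^(S k) * (m / 2^(S k)) = m) by (field; lra).
  assert (2^(S k) * (w - u) < m) by (rewrite <- E; apply Rmult_lt_compat_l; auto).
  assert (2^(S k) * (-(m / 2^(S k))) < 2^(S k) * (w - u)) by (apply Rmult_lt_compat_l; auto).
  split; nra.
Qed.

Definition peak (x0 : R) (k : nat) : R := x0 + sg x0 * (3/4 / 2^(S k)).

Lemma peak_in x0 k : in01 x0 -> in01 (peak x0 k).
Proof. intros H. apply in01_u; auto. pose proof (pow2_pos k).
  assert (1 <= 2^k) by (apply pow_R1_Rle; lra). change (2^(S k)) with (2 * 2^k).
  split. apply Rlt_le, Rdiv_lt_0_compat; lra.
  apply Rmult_le_reg_r with (2 * 2^k). lra. unfold Rdiv. rewrite Rmult_assoc, Rinv_l by lra. nra. Qed.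

Lemma peak_val x0 k : phi x0 k (peak x0 k) = 1.
Proof. unfold phi, peak. rewrite sg_u. pose proof (pow2_pos (S k)).
  replace (2 ^ S k * (3 / 4 / 2 ^ S k)) with (3/4) by (field; lra). apply B_peak. Qed.

Lemma peak_other x0 k j : j <> k -> phi x0 j (peak x0 k) = 0.
Proof. intros H. unfold phi, peak. rewrite sg_u. apply (region k); auto.
  pose proof (pow2_pos (S k)).
  replace (2 ^ S k * (3 / 4 / 2 ^ S k)) with (3/4) by (field; lra). lra. Qed.

Lemma phi_deriv x0 k y : exists l, derivable_pt_lim (phi x0 k) y l.
Proof.
  set (a := 2^(S k) * sg x0).
  assert (Hin : derivable_pt_lim (fun y => a * (y - x0)) y (a * (1 - 0))).
  { apply derivable_pt_lim_scal.
    apply derivable_pt_lim_minus. apply derivable_pt_lim_id. apply derivable_pt_lim_const. }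
  destruct (B_deriv (a * (y - x0))) as [l Hl].
  exists (l * (a * (1 - 0))). apply (deriv_loc _ (comp B (fun y => a * (y - x0))) _ 1). lra.
  intros z _. unfold phi, comp, a. f_equal. ring.
  apply derivable_pt_lim_comp; auto.
Qed.

Lemma sum_deriv x0 n c y : exists l,
  derivable_pt_lim (fun z => sumR n (fun i => c i * phi x0 i z)) y l.
Proof. induction n; simpl.
  exists 0. apply derivable_pt_lim_const.
  destruct IHn as [l1 H1]. destruct (phi_deriv x0 n y) as [l2 H2].
  exists (l1 + c n * l2).
  apply (derivable_pt_lim_plus (fun z => sumR n (fun i => c i * phi x0 i z)) (fun z => c n * phi x0 n z)).
  auto. apply derivable_pt_lim_scal; auto. Qed.

Lemma single_sum n (w : nat -> R) k : (forall i, i <> k -> w i = 0) ->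
  sumR n w = if Nat.ltb k n then w k else 0.
Proof. intros H. induction n; simpl. auto. rewrite IHn.
  destruct (Nat.eq_dec n k) as [->|Hne].
  - rewrite (proj2 (Nat.ltb_ge k k)) by lia. rewrite (proj2 (Nat.ltb_lt k (S k))) by lia. ring.
  - rewrite (H n Hne). destruct (Nat.ltb k n) eqn:E.
    + apply Nat.ltb_lt in E. rewrite (proj2 (Nat.ltb_lt k (S n))) by lia. ring.
    + apply Nat.ltb_ge in E. rewrite (proj2 (Nat.ltb_ge k (S n))) by lia. ring.
Qed.

Lemma transfer F H x d l : in01 x -> d > 0 -> (forall y, in01 y -> Rabs (y - x) < d -> F y = H y) ->
  derivable_pt_lim H x l -> diff_at01 F x.
Proof. intros Hx Hd HFH HH. exists l. intros eps Heps.
  destruct (HH eps Heps) as [del Hdel].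
  exists (Rmin d del). split. apply Rmin_glb_lt; auto; apply cond_pos.
  intros y Hy Hyx Hyd.
  rewrite (HFH y Hy) by (apply Rlt_le_trans with (1 := Hyd); apply Rmin_l).
  rewrite (HFH x Hx) by (rewrite Rminus_diag, Rabs_R0; auto).
  replace y with (x + (y - x)) at 1 by ring. apply Hdel. lra.
  apply Rlt_le_trans with (1 := Hyd); apply Rmin_r. Qed.

Lemma zero_lemma a C : 0 <= C -> (forall eps, eps > 0 -> Rabs a <= eps * C + eps) -> a = 0.
Proof. intros HC H. destruct (Req_dec_T a 0) as [|Hne]; auto. exfalso.
  assert (Ha : 0 < Rabs a) by (apply Rabs_pos_lt; auto).
  specialize (H (Rabs a / (2 * (C + 1))) ltac:(apply Rdiv_lt_0_compat; lra)).
  assert (Rabs a / (2 * (C + 1)) * C + Rabs a / (2 * (C + 1)) = Rabs a / 2) by (field; lra).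
  lra. Qed.

Definition Sp (x0 : R) (G : R -> R) : Prop :=
  exists n c, forall y, G y = sumR n (fun i => c i * phi x0 i y).

Lemma pad n m (c w : nat -> R) : sumR n (fun i => c i * w i) =
  sumR (n + m) (fun i => (if Nat.ltb i n then c i else 0) * w i).
Proof. induction m.
  - rewrite Nat.add_0_r. apply sumR_ext. intros i Hi. rewrite (proj2 (Nat.ltb_lt i n)) by lia. auto.
  - rewrite Nat.add_succ_r. simpl. rewrite <- IHm.
    rewrite (proj2 (Nat.ltb_ge (n + m) n)) by lia. ring. Qed.

Theorem mainTheorem12 (x0 : R) (Hx0 : 0 <= x0 <= 1) :
  exists S : (R -> R) -> Prop,
    is_subspace S /\ infinite_dim01 S /\
    (forall G, S G -> everywhere_diff01 G) /\
    (forall F, in_closure01 S F ->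
       (exists f : R -> R, HK_integrable f 0 1 /\
          forall x, 0 <= x <= 1 -> HK_integral f 0 x (F x - F 0)) /\
       (forall x, 0 <= x <= 1 -> x <> x0 -> diff_at01 F x)).
Proof.
  assert (H0 : in01 x0) by exact Hx0.
  exists (Sp x0). split; [|split; [|split]].
  - split; [|split].
    + exists O, (fun _ => 0). intros; simpl; auto.
    + intros f g [n1 [c1 H1]] [n2 [c2 H2]].
      exists (n1 + n2)%nat, (fun i => (if Nat.ltb i n1 then c1 i else 0) + (if Nat.ltb i n2 then c2 i else 0)).
      intros y. rewrite H1, H2. rewrite (pad n1 n2), (pad n2 n1). rewrite (Nat.add_comm n2 n1).
      rewrite <- sumR_plus. apply sumR_ext. intros; ring.
    + intros a f [n [c H]]. exists n, (fun i => a * c i). intros y. rewrite H.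
      rewrite <- sumR_scal. apply sumR_ext. intros; ring.
  - intros n. exists (phi x0). split.
    + intros i Hi. exists (S i), (fun j => if Nat.eqb j i then 1 else 0). intros y.
      rewrite (single_sum (S i) _ i).
      * rewrite (proj2 (Nat.ltb_lt i (S i))) by lia. rewrite Nat.eqb_refl. ring.
      * intros j Hj. rewrite (proj2 (Nat.eqb_neq j i)) by auto. ring.
    + intros c Hc i Hi. specialize (Hc (peak x0 i) (peak_in x0 i H0)).
      rewrite (single_sum n _ i) in Hc.
      * rewrite (proj2 (Nat.ltb_lt i n)) in Hc by lia. rewrite peak_val in Hc. lra.
      * intros j Hj. rewrite peak_other by auto. ring.
  - intros G [n [c H]] x Hx. destruct (sum_deriv x0 n c x) as [l Hl].
    apply (transfer G (fun z => sumR n (fun i => c i * phi x0 i z)) x 1 l Hx ltac:(lra)); auto.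
  - intros F [Hc Happ].
    assert (Hloc : forall k y, in01 y -> (forall j, j <> k -> phi x0 j y = 0) ->
               F y = F (peak x0 k) * phi x0 k y).
    { intros k y Hy Hz.
      assert (F y - F (peak x0 k) * phi x0 k y = 0); [|lra].
      apply (zero_lemma _ (Rabs (phi x0 k y))). apply Rabs_pos.
      intros eps Heps. destruct (Happ eps Heps) as [G [[n [c HG]] HGF]].
      set (e := if Nat.ltb k n then c k else 0).
      assert (E1 : G y = e * phi x0 k y).
      { rewrite HG, (single_sum n _ k). unfold e. destruct (Nat.ltb k n); ring.
        intros j Hj. rewrite Hz by auto. ring. }
      assert (E2 : G (peak x0 k) = e).
      { rewrite HG, (single_sum n _ k). unfold e. rewrite peak_val. destruct (Nat.ltb k n); ring.
        intros j Hj. rewrite peak_other by auto. ring. }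
      pose proof (HGF y Hy) as A1. pose proof (HGF (peak x0 k) (peak_in x0 k H0)) as A2.
      replace (F y - F (peak x0 k) * phi x0 k y) with
        ((F y - G y) + (G (peak x0 k) - F (peak x0 k)) * phi x0 k y) by (rewrite E1, E2; ring).
      eapply Rle_trans. apply Rabs_triang. rewrite Rabs_mult.
      rewrite <- Rabs_Ropp in A2. replace (- (F (peak x0 k) - G (peak x0 k))) with
        (G (peak x0 k) - F (peak x0 k)) in A2 by ring.
      pose proof (Rabs_pos (phi x0 k y)).
      assert (Rabs (G (peak x0 k) - F (peak x0 k)) * Rabs (phi x0 k y) <= eps * Rabs (phi x0 k y))
        by (apply Rmult_le_compat_r; auto).
      lra. }
    assert (Hdiff : forall x, 0 <= x <= 1 -> x <> x0 -> diff_at01 F x).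
    { intros x Hx Hne. destruct (ownership x0 x H0 Hx Hne) as [k [d [Hd Hown]]].
      destruct (phi_deriv x0 k x) as [l Hl].
      apply (transfer F (fun y => F (peak x0 k) * phi x0 k y) x d (F (peak x0 k) * l) Hx Hd).
      intros y Hy Hyd. apply Hloc; auto.
      apply derivable_pt_lim_scal; auto. }
    split; auto. apply (FTC F x0 H0 Hc Hdiff).
Qed.
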